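(* Let $p\geq 1$ and $q\geq 2$ be integers, and let $\Delta_{L_{p,q}}(x,t)$ be the two-variable Alexander polynomial of the link $L_{p,q}$, where $x$ corresponds to the axis $A$ and $t$ to $\hat B_{p,q}$. Then $\Delta_{L_{p,2}}(x,t)=1+xt^{2p-1}$, and for $q\geq3$, $$\Delta_{L_{p,q}}(x,t)=1+x^{q-1}t^{2p+q-3}+xt^2\left(\frac{1+t^{2p-3}}{1+t}\right)\left(\frac{1-(xt)^{q-2}}{1-xt}\right).$$
   Context: In the $q$-strand braid group with generators $\sigma_1,\dots,\sigma_{q-1}$ ($\sigma_i$ is the crossing of the $(i+1)$st strand over the $i$th), $B_{p,q}=\sigma_{q-1}\sigma_{q-2}\cdots\sigma_2\sigma_1^{2p-1}$; $\hat B_{p,q}$ is its closure, $A$ its braid axis, and $L_{p,q}=A\cup\hat B_{p,q}\subset S^3$. The Alexander polynomial is normalized via Morton's formula $\Delta_{L_{p,q}}(x,t)=\det\big(I-x\,C_{q-1}C_{q-2}\cdots C_2C_1^{2p-1}\big)$, where $C_i$ is the $(q-1)\times(q-1)$ matrix which equals the identity except in row $i$, whose entries in columns $i-1,i,i+1$ are $t,-t,1$ respectively (truncated to the two existing entries when $i=1$ or $i=q-1$). *)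

(* Defs.v *)
From HB Require Import structures.
From mathcomp Require Import all_boot all_order all_algebra.
Set Implicit Arguments. Unset Strict Implicit. Unset Printing Implicit Defensive.
Import Order.TTheory GRing.Theory Num.Theory.
Local Open Scope ring_scope.

(* Morton's matrix C_i (1-based i, 1 <= i <= n = q-1), size n x n:
   identity except row i, whose entries in columns i-1, i, i+1 are t, -t, 1
   (columns outside 1..n simply do not exist, giving the truncation). *)
Definition Cmat (R : comRingType) (n i : nat) (t : R) : 'M[R]_n :=
  \matrix_(r < n, c < n)
    if r.+1 == i then
      (if c.+1 == i.-1 then t
       else if c.+1 == i then - t
       else if c.+1 == i.+1 then 1 else 0)
    else (r == c)%:R.

Definition morton_prod (R : comRingType) (p q : nat) (t : R) : 'M[R]_(q.-1) :=
  foldr (fun i A => Cmat q.-1 i t *m A)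
        (iter (2 * p - 1) (fun A => Cmat q.-1 1 t *m A) 1%:M)
        (rev (iota 2 (q - 2))).

Definition alexLpq (R : comRingType) (p q : nat) (x t : R) : R :=
  \det (1%:M - x *: morton_prod p q t).

(* Main.v *)
Require Import Defs.
From HB Require Import structures.
From mathcomp Require Import all_boot all_order all_algebra.
From mathcomp Require Import ring zify.
Set Implicit Arguments. Unset Strict Implicit. Unset Printing Implicit Defensive.
Import Order.TTheory GRing.Theory Num.Theory.
Local Open Scope ring_scope.


Lemma sum_delta (R : comRingType) n (m : nat) (g : nat -> R) :
  \sum_(k < n) ((k : nat) == m)%:R * g k = if (m < n)%N then g m else 0.
Proof.
elim: n => [|n IH]; first by rewrite big_ord0.
rewrite big_ord_recr /= IH.
case: (eqVneq m n) => [->|ne] /=.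
- by rewrite ltnn ltnSn mul1r add0r.
- rewrite mul0r addr0; congr (if _ then _ else _); by rewrite ltnS [RHS]leq_eqVlt (negbTE ne).
Qed.

Lemma Cmat_row (R : comRingType) n (t : R) (i k : 'I_n) :
  Cmat n i.+1 t i k = (if (0 < i)%N then t * ((k : nat) == i.-1)%:R else 0)
     - t * ((k : nat) == i)%:R + ((k : nat) == i.+1)%:R.
Proof.
rewrite mxE eqxx /=.
case: i => [[|i] Hi] /=; case: k => [k Hk] /=;
  repeat (case: eqP => ?); try lia; simpl; ring.
Qed.

Lemma Cmat_other (R : comRingType) n m (t : R) (i k : 'I_n) :
  i.+1 != m -> Cmat n m t i k = ((k : nat) == i)%:R.
Proof. by rewrite mxE => /negbTE ->; rewrite eq_sym. Qed.

Lemma mul_Cmat_row (R : comRingType) n (t : R) (f : nat -> nat -> R) (i c : 'I_n) :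
  (Cmat n i.+1 t *m \matrix_(a < n, b < n) f a b) i c =
  (if (0 < i)%N then t * f i.-1 c else 0) - t * f i c
  + (if (i.+1 < n)%N then f i.+1 c else 0).
Proof.
rewrite mxE.
have E : forall k : 'I_n, Cmat n i.+1 t i k * (\matrix_(a < n, b < n) f a b) k c =
  (if (0 < i)%N then t else 0) * (((k : nat) == i.-1)%:R * f k c)
  - t * (((k : nat) == i)%:R * f k c) + ((k : nat) == i.+1)%:R * f k c.
  by move=> k; rewrite Cmat_row mxE; case: ifP => _; ring.
rewrite (eq_bigr _ (fun k _ => E k)) big_split sumrB /= -!mulr_sumr.
rewrite !(sum_delta _ _ (fun k => f k c)) ltn_ord.
have -> : (i.-1 < n)%N by apply: leq_ltn_trans (leq_pred _) (ltn_ord i).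
by case: ifP => _; rewrite ?mul0r ?add0r ?sub0r.
Qed.

Lemma mul_Cmat_other (R : comRingType) n m (t : R) (f : nat -> nat -> R) (i c : 'I_n) :
  i.+1 != m -> (Cmat n m t *m \matrix_(a < n, b < n) f a b) i c = f i c.
Proof.
move=> H; rewrite mxE.
under eq_bigr => k _ do rewrite Cmat_other // mxE.
by rewrite (sum_delta _ _ (fun k => f k c)) ltn_ord.
Qed.

Section G.
Variable R : comRingType.
Variable t : R.

Definition arow (k c : nat) : R :=
  if c == 0%N then (- t) ^+ k else if c == 1%N then \sum_(j < k) (- t) ^+ j else 0.

Fixpoint G (a : nat -> R) (j r c : nat) : R :=
  match r with
  | 0 => a c
  | r'.+1 => if (r' < j)%N then t * G a j r' c - t * (r'.+1 == c)%:R + (r'.+2 == c)%:R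
             else (r'.+1 == c)%:R
  end.

Lemma G_same a j r c : (r <= j)%N -> G a j r c = G a j.+1 r c.
Proof.
elim: r => [|r IH] //= H.
by rewrite H ltnS (ltnW H) IH // ltnW.
Qed.

Lemma G_far a j r c : (j.+1 < r)%N -> G a j r c = G a j.+1 r c.
Proof.
case: r => [|r] //= H.
rewrite ltnS in H; have h1 : (r < j)%N = false by rewrite ltnNge (ltnW H).
have h2 : (r < j.+1)%N = false by rewrite ltnNge H.
by rewrite h1 h2.
Qed.

Lemma C1pow n k :
  iter k (fun A => Cmat n 1 t *m A) 1%:M = \matrix_(r < n, c < n) G (arow k) 0 r c.
Proof.
elim: k => [|k IH].
  apply/matrixP => i c; rewrite !mxE /=.
  case: i => [[|i] Hi]; case: c => [[|c] Hc] //=; rewrite /arow /= ?big_ord0 //.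
  by case: c Hc.
rewrite iterS IH; apply/matrixP => i c.
have [Hi0|Hi0] := eqVneq (i : nat) 0%N.
  have -> : Cmat n 1 t = Cmat n (i.+1) t by rewrite Hi0.
  rewrite mul_Cmat_row !mxE Hi0 /= /arow.
  case: c => [[|[|c]] Hc] /=.
  - by rewrite exprS; case: ifP => _; ring.
  - rewrite Hc big_ord_recl /= expr0.
    under [X in _ = 1 + X]eq_bigr => j _ do rewrite exprSr /bump /=.
    by rewrite -mulr_suml; ring.
  - by case: ifP => _; ring.
rewrite mul_Cmat_other; last by rewrite eqSS.
rewrite mxE; case: (nat_of_ord i) Hi0 => //.
Qed.

Lemma Cfold n a m : (m < n)%N ->
  foldr (fun i A => Cmat n i t *m A) (\matrix_(r < n, c < n) G a 0 r c) (rev (iota 2 m))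
  = \matrix_(r < n, c < n) G a m r c.
Proof.
elim: m => [|m IH] Hm //.
rewrite -[m.+1]addn1 iotaD rev_cat /= addn1 IH; last by apply: ltnW.

apply/matrixP => i c.
have [Hi|Hi] := eqVneq (i : nat) m.+1.
  have -> : Cmat n (2 + m) t = Cmat n (i.+1) t by rewrite Hi.
  rewrite mul_Cmat_row !mxE Hi /= ltnn ltnSn -G_same //.
  case: ifP => H; first by rewrite /= ltnNge leqnSn /=.
  have -> : (m.+2 == c) = false.
    by apply/negbTE; rewrite neq_ltn (leq_trans (ltn_ord c)) ?orbT // leqNgt H.
  by rewrite addr0.
rewrite mul_Cmat_other; last by rewrite add2n eqSS.
rewrite !mxE.
case: (ltngtP i m.+1) Hi => // H _.
  by rewrite G_same.
by rewrite G_far.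
Qed.

End G.

Definition Tf (R : comRingType) (x t : R) (k : nat) (i c : nat) : R :=
  if i == 0%N then
    (if c == 0%N then 1 - x * (- t) ^+ k
     else if c == 1%N then - x * \sum_(j < k) (- t) ^+ j else 0)
  else (i == c)%:R * (1 + x * t) - t * (i == c.+1)%:R - x * (i.+1 == c)%:R.

Definition Pm (R : comRingType) n (t : R) : 'M[R]_n :=
  \matrix_(i < n, j < n) (((i : nat) == j)%:R - t * ((i : nat) == j.+1)%:R).

Lemma det_Pm (R : comRingType) n (t : R) : \det (Pm n t) = 1.
Proof.
rewrite det_trig.
  apply: big1 => i _; rewrite mxE eqxx.
  by rewrite (ltn_eqF (ltnSn _)) mulr0 subr0.
apply/is_trig_mxP => i j H; rewrite mxE (ltn_eqF H).
have -> : ((i : nat) == j.+1) = false by apply/negbTE; rewrite neq_ltn ltnS ltnW.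
by rewrite mulr0 subr0.
Qed.

Lemma alex_Tf (R : comRingType) p q (x t : R) : (2 <= q)%N ->
  alexLpq p q x t = \det (\matrix_(i < q.-1, j < q.-1) Tf x t (2 * p - 1) i j).
Proof.
move=> hq.
rewrite /alexLpq /morton_prod C1pow Cfold; last first.
  by case: q hq => [|[|q]] //= _; rewrite subn2 /= ltnSn.
rewrite -[LHS]mul1r -[X in X * _](det_Pm q.-1 t) -det_mulmx; congr (\det _).
apply/matrixP => i c; rewrite !mxE.
under eq_bigr => k _ do rewrite !mxE.
have E : forall k : 'I_q.-1, ((i : nat) == k)%:R - t * ((i : nat) == k.+1)%:R =
   ((k : nat) == i)%:R - (if (0 < i)%N then t else 0) * ((k : nat) == i.-1)%:R.
  move=> k; case: i => [[|i'] Hi] /=.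
    by rewrite mulr0 mul0r !subr0 eq_sym.
  by rewrite eqSS [_ == (k : nat)]eq_sym [i' == _]eq_sym.
under eq_bigr => k _ do rewrite E mulrBl -mulrA.
rewrite sumrB -mulr_sumr.
rewrite (sum_delta _ _ (fun k => (k == c)%:R - x * G t (arow t (2 * p - 1)) (q - 2) k c)).
rewrite (sum_delta _ _ (fun k => (k == c)%:R - x * G t (arow t (2 * p - 1)) (q - 2) k c)).
rewrite ltn_ord.
have -> : (i.-1 < q.-1)%N by apply: leq_ltn_trans (leq_pred _) (ltn_ord i).
rewrite /Tf.
clear E; case: i => [[|i'] Hi] /=.
  rewrite mul0r subr0 /arow.
  by case: c => [[|[|c']] Hc] /=; ring.
have -> : (i' < q - 2)%N by lia.
rewrite eqSS; ring.
Qed.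


Lemma det_lead (R : comRingType) (f : nat -> nat -> R) k :
  (forall j, (j < k)%N -> f k.+1 j = 0) -> (forall i, (i < k)%N -> f i k.+1 = 0) ->
  \det (\matrix_(i < k.+2, j < k.+2) f i j) =
  f k.+1 k.+1 * \det (\matrix_(i < k.+1, j < k.+1) f i j)
  - f k.+1 k * f k k.+1 * \det (\matrix_(i < k, j < k) f i j).
Proof.
move=> H1 H2.
rewrite (expand_det_row _ ord_max) big_ord_recr /= big_ord_recr /=.
rewrite big1 ?add0r; last first.
  by move=> j _; rewrite mxE /= H1 ?mul0r.
rewrite !mxE /=.
have C1 : forall m (g : nat -> nat -> R),
    cofactor (\matrix_(i < m.+1, j < m.+1) g i j) ord_max ord_max
    = \det (\matrix_(i < m, j < m) g i j).
  move=> m g; rewrite /cofactor /=.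
  rewrite -signr_odd addnn odd_double expr0 mul1r.
  congr (\det _); apply/matrixP => i j; rewrite !mxE.
  by rewrite !lift_max.
rewrite C1 /cofactor /= -signr_odd addSn addnn /= odd_double /= expr1.
have -> : row' ord_max (col' (widen_ord (leqnSn k.+1) ord_max)
     (\matrix_(i < k.+2, j < k.+2) f i j))
    = \matrix_(i < k.+1, j < k.+1) f i (if (j < k)%N then (j : nat) else k.+1).
  apply/matrixP => i j; rewrite !mxE lift_max.
  congr (f _ _); rewrite /= /bump /=.
  case: ltnP => H; first by rewrite add0n.
  have Hj := ltn_ord j.
  by have -> : (j : nat) = k by apply/eqP; rewrite eqn_leq H -ltnS Hj.
rewrite (expand_det_col _ ord_max) big_ord_recr big1 ?add0r; last first.
  by move=> i _; rewrite mxE /= ltnn H2 ?mul0r.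
rewrite mxE /= ltnn (C1 k (fun i j => f i (if (j < k)%N then j else k.+1))).
have -> : \matrix_(i < k, j < k) f i (if (j < k)%N then (j : nat) else k.+1)
   = \matrix_(i < k, j < k) f i j.
  by apply/matrixP => i j; rewrite !mxE ltn_ord.
ring.
Qed.

Lemma Tf_zero (R : comRingType) (x t : R) K i c :
  (i.+1 < c)%N || (c.+1 < i)%N -> Tf x t K i c = 0.
Proof.
move=> H; rewrite /Tf.
case: i H => [|i] H /=.
  case: c H => [|[|c]] //= _.
have -> : (i.+1 == c) = false by lia.
have -> : (i.+1 == c.+1) = false by lia.
have -> : (i.+2 == c) = false by lia.
by rewrite mul0r !mulr0 !subr0.
Qed.

Lemma Tf_diag (R : comRingType) (x t : R) K i : (0 < i)%N -> Tf x t K i i = 1 + x * t.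
Proof.
case: i => // i _; rewrite /Tf /= eqxx.
have -> : (i.+1 == i.+2) = false by lia.
have -> : (i.+2 == i.+1) = false by lia.
rewrite /= ?mulr1n ?mulr0n; ring.
Qed.

Lemma Tf_sub (R : comRingType) (x t : R) K i : Tf x t K i.+1 i = - t.
Proof.
rewrite /Tf /= eqxx.
have -> : (i.+1 == i) = false by lia.
have -> : (i.+2 == i) = false by lia.
rewrite /= ?mulr1n ?mulr0n; ring.
Qed.

Lemma Tf_sup (R : comRingType) (x t : R) K i : (0 < i)%N -> Tf x t K i i.+1 = - x.
Proof.
case: i => // i _; rewrite /Tf /= eqxx.
have -> : (i.+1 == i.+2) = false by lia.
have -> : (i.+1 == i.+3) = false by lia.
rewrite /= ?mulr1n ?mulr0n; ring.
Qed.

Section Rec.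
Variable R : comRingType.
Variables x t : R.
Variable k0 : nat.
Let K := k0.+1.
Hypothesis hK : (- t) ^+ K = - t ^+ K.
Let s := \sum_(j < K) (- t) ^+ j.
Let w := 1 + t ^+ k0 - s.
Let D k := \det (\matrix_(i < k, j < k) Tf x t K i j).
Let F k := 1 + x ^+ k.+1 * t ^+ (K + k) + x * t * w * \sum_(j < k) (x * t) ^+ j.

Lemma D_rec k : D k.+3 = (1 + x * t) * D k.+2 - x * t * D k.+1.
Proof.
rewrite /D det_lead; last first.
- by move=> i Hi; apply: Tf_zero; apply/orP; left; rewrite !ltnS.
- by move=> j Hj; apply: Tf_zero; apply/orP; right; rewrite !ltnS.
rewrite Tf_diag // Tf_sub Tf_sup //; ring.
Qed.

Lemma D_closed k : D k.+1 = F k.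
Proof.
have F0 : D 1 = F 0.
  rewrite /D det_mx11 mxE /Tf /= /F big_ord0 addn0 expr1 mulr0 addr0 -mulrN.
  congr (_ + _ * _); rewrite -[t ^+ K]opprK; congr (- _); exact: hK.
have F1 : D 2 = F 1.
  rewrite /D det_lead // det_mx00 -/(D 1) F0 Tf_diag // Tf_sub.
  have -> : Tf x t K 0 1 = - x * s by [].
  rewrite /F big_ord1 big_ord0 expr0 /w addn0 addn1 /K !exprS; ring.
elim: k {-2}k (leqnn k) => [|n IH] k Hk.
  by case: k Hk.
case: k Hk => [|[|k]] Hk //.
rewrite D_rec (IH k.+1) ?(IH k); try lia.
rewrite /F.
have E1 : t ^+ (K + k.+1) = t * t ^+ (K + k) by rewrite addnS exprS.
have E2 : t ^+ (K + k.+2) = t * (t * t ^+ (K + k)) by rewrite !addnS !exprS.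
rewrite E1 E2; move: (t ^+ (K + k)) => e.
rewrite !big_ord_recr /= !exprS; ring.
Qed.

End Rec.

Lemma D_closed' (R : comRingType) (x t : R) k0 k : (- t) ^+ k0.+1 = - t ^+ k0.+1 ->
  \det (\matrix_(i < k.+1, j < k.+1) Tf x t k0.+1 i j) =
  1 + x ^+ k.+1 * t ^+ (k0.+1 + k)
  + x * t * (1 + t ^+ k0 - \sum_(j < k0.+1) (- t) ^+ j) * \sum_(j < k) (x * t) ^+ j.
Proof. move=> h; have H := @D_closed R x t k0 h k. simpl in H. exact H. Qed.

Unset Implicit Arguments.


Lemma geo {R : comRingType} (u : R) n : (\sum_(j < n) u ^+ j) * (1 - u) = 1 - u ^+ n.
Proof.
elim: n => [|n IH]; first by rewrite big_ord0 mul0r expr0 subrr.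
by rewrite big_ord_recr /= mulrDl IH exprS; ring.
Qed.

Lemma oddpow {R : comRingType} (t : R) p' : (- t) ^+ (2 * p').+1 = - t ^+ (2 * p').+1.
Proof. by rewrite !exprS !exprM sqrrN mulNr. Qed.

Theorem lemma3p1 (p q : nat) (hp : (1 <= p)%N) (hq : (2 <= q)%N) :
  (q = 2%N -> forall (F : fieldType) (x t : F),
      alexLpq p q x t = 1 + x * t ^+ (2 * p - 1)) /\
  ((3 <= q)%N -> forall (F : fieldType) (x t : F),
      t != 0 -> 1 + t != 0 -> 1 - x * t != 0 ->
      alexLpq p q x t =
        1 + x ^+ (q - 1) * t ^+ (2 * p + q - 3)
        + x * t ^+ 2 * ((1 + t ^ (2 * (p : int) - 3)) / (1 + t))
                     * ((1 - (x * t) ^+ (q - 2)) / (1 - x * t))).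
Proof.
case: p hp => [|p'] // _.
have EK : (2 * p'.+1 - 1 = (2 * p').+1)%N by lia.
split.
  move=> -> F x t.
  rewrite (@alex_Tf _ _ _ x t (leqnn 2)) EK.
  rewrite (@D_closed' _ x t (2 * p') 0 (oddpow t p')) big_ord0 mulr0 addr0 expr1 addn0.
  by [].
move=> hq3 F x t ht ht1 hu.
case: q hq hq3 => [|[|[|m]]] // _ _.
rewrite (@alex_Tf _ _ _ x t (isT : (2 <= m.+3)%N)) EK.
rewrite (@D_closed' _ x t (2 * p') m.+1 (oddpow t p')).
have -> : (m.+3 - 1 = m.+2)%N by lia.
have -> : (m.+3 - 2 = m.+1)%N by lia.
have -> : (2 * p'.+1 + m.+3 - 3 = (2 * p').+1 + m.+1)%N by lia.
set T := t ^ _.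
have hT : t * T = t ^+ (2 * p').
  rewrite /T -{1}(expr1z t) -expfzDr //.
  by have -> : (1 + (2 * (p'.+1 : int) - 3) = (2 * p')%N :> int)%R by lia.
set s := \sum_(j < _) _.
have hs : s * (1 + t) = 1 + t ^+ (2 * p').+1.
  by have := geo (- t) (2 * p').+1; rewrite oddpow !opprK.
have hS : \sum_(j < m.+1) (x * t) ^+ j = (1 - (x * t) ^+ m.+1) / (1 - x * t).
  by rewrite -geo mulfK.
have hc : t ^+ 2 * ((1 + T) / (1 + t)) = t * (1 + t ^+ (2 * p') - s).
  apply: (mulIf ht1); rewrite mulrA divfK //.
  apply/eqP; rewrite -subr_eq0; rewrite exprS in hs.
  have -> : t ^+ 2 * (1 + T) - t * (1 + t ^+ (2 * p') - s) * (1 + t) =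
     t * (t * T - t ^+ (2 * p')) + t * (s * (1 + t) - (1 + t * t ^+ (2 * p'))) by ring.
  by rewrite hT hs !subrr !mulr0 addr0.
rewrite hS -(mulrA x (t ^+ 2)) hc; ring.
Qed.
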